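(* Let $t$ be a positive integer and $G$ a complete multipartite graph. Consider the following greedy procedure: while uncolored vertices remain, let $H$ be the subgraph induced by the uncolored vertices (itself a complete multipartite graph); if the largest part of $H$ has at least $2t$ vertices, let $W$ be that entire part, otherwise let $W$ be a maximum $t$-sparse set of $H$; assign a new color to all vertices of $W$. Then the resulting coloring is a $t$-relaxed coloring of $G$ using at most $2\chi_t(G)$ colors.
   Context: A set $S\subseteq V(G)$ is $t$-sparse if the induced subgraph $G[S]$ has maximum degree at most $t$. A map $f$ from $V(G)$ to a finite set of colors is a $t$-relaxed coloring if every vertex $u$ has at most $t$ neighbors $v$ with $f(v)=f(u)$; $\chi_t(G)$ is the minimum number of colors in a $t$-relaxed coloring of $G$. *)

(* Defs.v *)
From mathcomp Require Import all_boot.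
Set Implicit Arguments. Unset Strict Implicit. Unset Printing Implicit Defensive.

(* G is complete multipartite: vertices are partitioned into parts (labelled
   by part : T -> nat) and two vertices are adjacent iff they lie in different
   parts.  (This makes e symmetric and irreflexive.) *)
Definition complete_multipartite (T : finType) (e : rel T) : Prop :=
  exists part : T -> nat, forall x y, e x y = (part x != part y).

Definition t_sparse (T : finType) (e : rel T) (t : nat) (S : {set T}) : bool :=
  [forall x in S, #|[set y in S | e x y]| <= t].

Definition t_relaxed (T : finType) (C : eqType) (e : rel T) (t : nat)
  (f : T -> C) : Prop :=
  forall u, #|[set v | e u v & f v == f u]| <= t.

Definition has_relaxed_coloring (T : finType) (e : rel T) (t k : nat) : bool :=
  [exists f : {ffun T -> 'I_k}, [forall u, #|[set v | e u v & f v == f u]| <= t]].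

Lemma chi_t_exists (T : finType) (e : rel T) (t : nat) :
  (forall x, ~~ e x x) -> exists k, has_relaxed_coloring e t k.
Proof.
move=> irr; exists #|T|; apply/existsP; exists [ffun x => enum_rank x].
apply/forallP => u.
apply: leq_trans (leq0n t); rewrite leqn0 cards_eq0; apply/eqP/setP => v.
rewrite !inE !ffunE; apply/negbTE; apply/andP => [[euv /eqP]] /enum_rank_inj Evu.
by move: euv; rewrite Evu (negbTE (irr u)).
Qed.

(* chi_t(G): the minimum number of colors of a t-relaxed coloring
   (defined for loopless graphs; 0 by convention otherwise). *)
Definition chi_t (T : finType) (e : rel T) (t : nat) : nat :=
  match boolP [forall x, ~~ e x x] with
  | AltTrue h => ex_minn (chi_t_exists t (fun x => (forallP h) x))
  | AltFalse _ => 0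
  end.

(* The part of H = G[U] containing x in U (the non-neighbours of x in U). *)
Definition part_of (T : finType) (e : rel T) (U : {set T}) (x : T) : {set T} :=
  [set y in U | ~~ e x y].

Definition max_part (T : finType) (e : rel T) (U : {set T}) : nat :=
  \max_(x in U) #|part_of e U x|.

Definition greedy_step (T : finType) (e : rel T) (t : nat) (U W : {set T}) : Prop :=
  if 2 * t <= max_part e U then
    exists2 x, x \in U & (W = part_of e U x /\ #|W| = max_part e U)
  else
    [/\ W \subset U, t_sparse e t W &
        forall S : {set T}, S \subset U -> t_sparse e t S -> #|S| <= #|W|].

Fixpoint greedy_run (T : finType) (e : rel T) (t : nat) (U : {set T})
  (ws : seq {set T}) : Prop :=
  match ws with
  | [::] => U = set0
  | W :: ws' => [/\ U != set0, greedy_step e t U W & greedy_run e t (U :\: W) ws']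
  end.

Definition greedy_coloring (T : finType) (ws : seq {set T}) (v : T) : nat :=
  find (fun W : {set T} => v \in W) ws.

(* Main.v *)
Require Import Defs.
From mathcomp Require Import all_boot zify.
Set Implicit Arguments. Unset Strict Implicit.

Lemma sum_partition (T J : finType) (g : T -> J) (C : {set T}) :
  \sum_(j : J) #|[set x in C | g x == j]| = #|C|.
Proof.
rewrite -sum1_card (partition_big g predT) //=; apply: eq_bigr => j _.
by rewrite -sum1_card; apply: eq_bigl => x; rewrite inE.
Qed.

Lemma two_parts (T : finType) (part : T -> nat) (t : nat) (C : {set T}) x y :
  x \in C -> y \in C -> part x != part y ->
  (forall u, u \in C -> #|[set v in C | part u != part v]| <= t) ->
  #|C| <= 2 * t.
Proof.
move=> xC yC nxy H.
have sub : C \subset [set v in C | part x != part v] :|: [set v in C | part y != part v].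
  apply/subsetP => v vC; rewrite !inE vC /=.
  case: (eqVneq (part x) (part v)) => //= <-; by rewrite eq_sym.
apply: leq_trans (subset_leq_card sub) _.
rewrite cardsU; have := H _ xC; have := H _ yC; lia.
Qed.
Lemma step_sub (T : finType) (e : rel T) t U W : greedy_step e t U W -> W \subset U.
Proof.
rewrite /greedy_step; case: ifP => _.
  by case=> x _ [-> _]; apply/subsetP => y; rewrite inE => /andP [].
by case.
Qed.

Lemma color_ok (T : finType) (e : rel T) t (irr : forall x, ~~ e x x)
  (part : T -> nat) (He : forall x y, e x y = (part x != part y)) ws : forall U,
  greedy_run e t U ws -> forall u, u \in U ->
  #|[set v in U | e u v & greedy_coloring ws v == greedy_coloring ws u]| <= t.
Proof.
elim: ws => [|W ws IH] U /=.
  by move=> -> u; rewrite inE.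
case=> _ st run u uU.
have WU := step_sub st.
rewrite /greedy_coloring /=.
case: ifP => uW.
  apply: (@leq_trans #|[set v in W | e u v]|).
    apply: subset_leq_card; apply/subsetP => v; rewrite !inE.
    case: (v \in W) => //=; rewrite ?andbT ?andbF //.
    by case/andP.
  move: st; rewrite /greedy_step; case: ifP => _.
    case=> x _ [WE _]; move: uW; rewrite WE => /[dup] uW.
    rewrite inE => /andP [_ nxu].
    apply: leq_trans (leq0n t); rewrite leqn0 cards_eq0; apply/eqP/setP => v.
    rewrite !inE; apply/negbTE; apply/andP => [[/andP [_ nxv] euv]].
    move: nxu nxv euv; rewrite !He !negbK => /eqP -> /eqP ->; by rewrite eqxx.
  by case=> _ /forallP /(_ u); rewrite uW.
have uUW : u \in U :\: W by rewrite inE uW uU.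
apply: leq_trans _ (IH _ run u uUW).
apply: subset_leq_card; apply/subsetP => v; rewrite !inE.
case: (v \in W) => //=.
  by case/and3P.
Qed.

Definition Pset (T : finType) (part : T -> nat) x := [set y | part y == part x].
Definition Qs (T : finType) (part : T -> nat) (U A : {set T}) :=
  [set x in U | Pset part x == A].
Definition Psi (T : finType) (part : T -> nat) t (U : {set T}) :=
  \sum_(A : {set T}) minn #|Qs part U A| (2 * t).

Lemma PsetE (T : finType) (part : T -> nat) x y :
  (Pset part x == Pset part y) = (part x == part y).
Proof.
apply/eqP/eqP => [h|h].
  have: x \in Pset part y by rewrite -h inE.
  by rewrite inE => /eqP.
by apply/setP => z; rewrite !inE h.
Qed.

Section S.
Variables (T : finType) (e : rel T) (part : T -> nat) (t : nat).
Hypothesis He : forall x y, e x y = (part x != part y).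
Hypothesis tpos : 0 < t.

Lemma part_ofE (U : {set T}) (x : T) : part_of e U x = Qs part U (Pset part x).
Proof. by apply/setP => y; rewrite !inE He negbK PsetE eq_sym. Qed.

Lemma Psi_pos (U : {set T}) (u : T) : u \in U -> 0 < Psi part t U.
Proof.
move=> uU; rewrite /Psi (bigD1 (Pset part u)) //=.
apply: leq_trans (leq_addr _ _); rewrite leq_min; apply/andP; split; last by lia.
by rewrite card_gt0; apply/set0Pn; exists u; rewrite inE uU eqxx.
Qed.

Lemma run_set0 ws : greedy_run e t set0 ws -> ws = [::].
Proof. by case: ws => //= W ws [/eqP]. Qed.

Lemma step_dec (U W : {set T}) : greedy_step e t U W -> U :\: W != set0 ->
  Psi part t (U :\: W) + t <= Psi part t U.
Proof.
move=> st ne.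
have WU := step_sub st.
move: st; rewrite /greedy_step; case: ifP => hmax.
  case=> x xU [WE Wc].
  rewrite /Psi (bigD1 (Pset part x)) //= [X in _ <= X](bigD1 (Pset part x)) //=.
  have -> : Qs part (U :\: W) (Pset part x) = set0.
    apply/setP => y; rewrite !inE WE part_ofE !inE; apply/negbTE.
    by case: (Pset part y == Pset part x); rewrite ?andbF ?andbT //= andNb.
  have -> : Qs part U (Pset part x) = W by rewrite WE part_ofE.
  rewrite cards0 Wc (minn_idPr hmax) min0n add0n.
  rewrite (eq_bigr (fun A => minn #|Qs part U A| (2 * t))); first by lia.
  move=> A nA; have -> // : Qs part (U :\: W) A = Qs part U A.
  apply/setP => y; rewrite !inE WE part_ofE !inE.
  case: (eqVneq (Pset part y) A) => [yA|]; last by rewrite !andbF.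
  by rewrite yA (negbTE nA) andbF /= ?eqxx ?andbT.
move/negbT: hmax; rewrite -ltnNge => hmax.
case=> _ sp maxW.
have small (V A : {set T}) : V \subset U -> #|Qs part V A| < 2 * t.
  move=> VU; case: (set_0Vmem (Qs part V A)) => [->|[y]]; first by rewrite cards0; lia.
  rewrite inE => /andP [yV /eqP yA].
  have yU := subsetP VU y yV.
  apply: leq_ltn_trans hmax.
  apply: (@leq_trans #|part_of e U y|); last by rewrite /max_part; exact: (@leq_bigmax_cond _ (fun y => y \in U) (fun y => #|part_of e U y|) y yU).
  apply: subset_leq_card; rewrite part_ofE -yA; apply/subsetP => z; rewrite !inE.
  by case/andP=> /(subsetP VU) -> ->.
have PsiE (V : {set T}) : V \subset U -> Psi part t V = #|V|.
  move=> VU; rewrite /Psi -(sum_partition (Pset part) V); apply: eq_bigr => A _.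
  by rewrite /Qs; apply/minn_idPl/ltnW/small.
rewrite !PsiE ?subsetDl ?subxx //.
rewrite cardsD (setIidPr WU).
have ltWU : #|W| < #|U|.
  have := cardsID W U; rewrite (setIidPr WU).
  have : 0 < #|U :\: W| by rewrite card_gt0.
  lia.
have geWt : t <= #|W|.
  rewrite leqNgt; apply/negP => lt.
  case/set0Pn: ne => x; rewrite inE => /andP [xW xU].
  have sub : x |: W \subset U by rewrite subUset sub1set xU WU.
  have cx : #|x |: W| = #|W|.+1 by rewrite cardsU1 xW.
  have spx : t_sparse e t (x |: W).
    apply/forallP => y; apply/implyP => _.
    apply: (@leq_trans #|x |: W|); last by rewrite cx.
    by apply: subset_leq_card; apply/subsetP => z; rewrite inE => /andP [].
  have := maxW _ sub spx; rewrite cx; lia.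
lia.
Qed.

Lemma run_bound ws : forall U, greedy_run e t U ws -> t * size ws < Psi part t U + t.
Proof.
elim: ws => [|W ws IH] U /=; first by move=> _; rewrite muln0; lia.
case=> /set0Pn [u uU] st run.
have := IH _ run; have := Psi_pos uU.
case: (eqVneq (U :\: W) set0) => [E|ne].
  by move: run; rewrite E => /run_set0 -> /=; lia.
have := step_dec st ne; lia.
Qed.

Lemma lower : Psi part t setT <= 2 * t * chi_t e t.
Proof.
rewrite /chi_t; generalize (boolP [forall x, ~~ e x x]); intros a.
destruct a as [h|h]; last first.
  by case/negP: h; apply/forallP => x; rewrite He eqxx.
case: ex_minnP => k /existsP [f /forallP Hf] _.
pose C (i : 'I_k) := [set v | f v == i].
pose pure i (A : {set T}) := (C i != set0) && [forall x in C i, Pset part x == A].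
pose c i A := if pure i A then 2 * t else #|Qs part (C i) A|.
have Ha A : minn #|Qs part setT A| (2 * t) <= \sum_i c i A.
  case: (boolP [exists i, pure i A]) => [/existsP [i pi]|/existsPn Hn].
    apply: leq_trans (geq_minr _ _) _; rewrite (bigD1 i) //= /c pi; exact: leq_addr.
  apply: leq_trans (geq_minl _ _) _.
  rewrite (eq_bigr (fun i => #|[set x in Qs part setT A | f x == i]|)).
    by rewrite sum_partition.
  move=> i _; rewrite /c (negbTE (Hn i)); apply: eq_card => y; rewrite !inE.
  by rewrite andbC.
have Hb i : \sum_A c i A <= 2 * t.
  case: (boolP [exists A, pure i A]) => [/existsP [A0 p0]|/existsPn Hn].
    rewrite (bigD1 A0) //= /c p0 big1 ?addn0 //.
    move: p0 => /andP [/set0Pn [x xC] /forallP allA0] A nA.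
    have hx := implyP (allA0 x) xC.
    have np : ~~ pure i A.
      apply/negP => /andP [_ /forallP /(_ x) /implyP /(_ xC) hA].
      by move: nA; rewrite -(eqP hA) (eqP hx) eqxx.
    rewrite (negbTE np); apply/eqP; rewrite cards_eq0; apply/eqP/setP => y.
    rewrite !inE; apply/negbTE/andP => [[yC /eqP yA]].
    have := implyP (allA0 y); rewrite inE yC yA => /(_ isT) hA.
    by move: nA; rewrite -(eqP hA) eqxx.
  rewrite (eq_bigr (fun A => #|[set x in C i | Pset part x == A]|)); last first.
    by move=> A _; rewrite /c (negbTE (Hn A)).
  rewrite sum_partition.
  case: (set_0Vmem (C i)) => [->|[x xC]]; first by rewrite cards0.
  have := Hn (Pset part x); rewrite /pure negb_and.
  have -> : (C i != set0) by apply/set0Pn; exists x.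
  rewrite /= negb_forall_in => /existsP [y /andP [yC ny]].
  rewrite PsetE in ny.
  apply: (@two_parts T part t (C i) x y xC yC); first by rewrite eq_sym.
  move=> u uC; apply: leq_trans (Hf u).
  apply: subset_leq_card; apply/subsetP => v; rewrite !inE.
  move: uC; rewrite inE => /eqP ->; by rewrite He andbC.
rewrite /Psi.
apply: (@leq_trans (\sum_A \sum_i c i A)); first by apply: leq_sum => A _; exact: Ha.
rewrite exchange_big /=.
apply: (@leq_trans (\sum_(i < k) 2 * t)); first by apply: leq_sum => i _; exact: Hb.
by rewrite sum_nat_const card_ord mulnC.
Qed.

End S.

Theorem mainTheorem6 (T : finType) (e : rel T) (t : nat) (ws : seq {set T}) :
  0 < t ->
  complete_multipartite e ->
  greedy_run e t [set: T] ws ->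
  t_relaxed e t (greedy_coloring ws) /\ size ws <= 2 * chi_t e t.
Proof.
move=> tpos [part He] run; split.
  move=> u; have irr x : ~~ e x x by rewrite He eqxx.
  apply: leq_trans (color_ok irr He run (in_setT u)).
  by apply: subset_leq_card; apply/subsetP => v; rewrite !inE.
have h1 := run_bound He tpos run.
have h2 : Psi part t setT <= 2 * t * chi_t e t by exact: lower He.
have : t * size ws < t * (2 * chi_t e t).+1.
  apply: leq_trans h1 _; rewrite mulnS mulnA (mulnC t 2); lia.
by rewrite ltn_pmul2l.
Qed.
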